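(* Let $\mathbf{F}$ be a finite field with $q$ elements, $0\le r\le n$, and $V_j=\operatorname{span}(b_1,\dots,b_j)\subseteq\mathbf{F}^n$ for the standard basis. Let $T_r\colon V_r\to V_n$ be a semi-idempotent partial linear map with domain $V_r$. For $0\le\ell\le n-r$ and $0\le j\le r$ define \[ h_\ell(j,T_r)=q^{\ell j}\sum_{\substack{S\colon V_{n-\ell}\to V_{n-\ell}\ \text{semi-idempotent}\\ \operatorname{rank}S\le j,\ S|_{V_r}=T_r}}\mu(\mathrm{srk}\,S)\binom{n-\ell-\operatorname{rank}S}{j-\operatorname{rank}S}_q . \] Then $h_\ell(j,T_r)$ does not depend on $\ell$.
   Context: A partial linear map on $V$ is a linear map from a subspace of $V$ to $V$; composition $T\circ S$ has domain $S^{-1}(\operatorname{dom}T)$. A partial linear map $T$ is semi-idempotent if for some $N$ it acts as the identity on $\operatorname{im}T^N$; for an operator $S\colon V\to V$ this means $V=X\oplus Y$ with $X,Y$ $S$-stable, $S|_X=\mathrm{id}$, $S|_Y$ nilpotent. The condition $S|_{V_r}=T_r$ means $S(v)=T_r(v)$ for $v\in V_r$ (so it forces $\operatorname{im}T_r\subseteq V_{n-\ell}$). $\mathrm{srk}\,S$ is the rank of $S^i$ for $i\gg0$. $\mu(i)=(-1)^iq^{\binom i2}$; $\binom ab_q$ is the $q$-binomial coefficient. *)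

(* Defs.v *)
From HB Require Import structures.
From mathcomp Require Import all_boot all_order all_algebra all_field.
From mathcomp Require Import boolp.
Set Implicit Arguments. Unset Strict Implicit. Unset Printing Implicit Defensive.
Import GRing.Theory.
Local Open Scope ring_scope.

(* Partial maps on a type: v |-> Some (f v) if v in the domain, None otherwise. *)
Fixpoint ppow (X : Type) (f : X -> option X) (N : nat) (v : X) : option X :=
  match N with
  | 0 => Some v
  | N'.+1 => obind f (ppow f N' v)
  end.

Definition semi_idempotent (X : Type) (f : X -> option X) : Prop :=
  exists N : nat, forall v w, ppow f N v = Some w -> f w = Some w.

(* V_r = span(b_1..b_r) = vectors with zero coordinates at indices >= r. *)
Definition inV (F : fieldType) (n r : nat) (v : 'rV[F]_n) : bool :=
  [forall k : 'I_n, (r <= k)%N ==> (v 0 k == 0)].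

(* A linear map T_r : V_r -> V_n is given by the images of b_1..b_r: *)
(* the rows of T : 'M_(r, n).  Its extension by 0 to an n x n matrix: *)
Definition extT (F : fieldType) (r n : nat) (T : 'M[F]_(r, n)) : 'M[F]_n :=
  \matrix_(i < n, j < n) \sum_(k < r | nat_of_ord k == nat_of_ord i) T k j.

Definition Tpart (F : fieldType) (r n : nat) (T : 'M[F]_(r, n))
  (v : 'rV[F]_n) : option 'rV[F]_n :=
  if inV r v then Some (v *m extT T) else None.

(* Inclusion F^m = V_m into F^n (as the first m coordinates). *)
Definition emb (F : fieldType) (m n : nat) (u : 'rV[F]_m) : 'rV[F]_n :=
  \row_(j < n) \sum_(k < m | nat_of_ord k == nat_of_ord j) u 0 k.

(* S : V_m -> V_m (matrix acting on row vectors) satisfies S|_{V_r} = T_r. *)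
Definition restricts_to (F : fieldType) (m r n : nat)
  (S : 'M[F]_m) (T : 'M[F]_(r, n)) : Prop :=
  forall u : 'rV[F]_m, inV r u -> emb n (u *m S) = emb n u *m extT T.

(* stable rank: rank of S^i for i >> 0; for an m x m matrix the ranks *)
(* of powers are stationary from i = m on. *)
Definition srk (F : fieldType) (m : nat) (S : 'M[F]_m) : nat := \rank (S ^+ m).

Definition mu (q i : nat) : int := (-1) ^+ i * (q ^ 'C(i, 2))%N%:Z.

Fixpoint qbin (q a b : nat) {struct a} : nat :=
  match a, b with
  | _, 0 => 1
  | 0, _.+1 => 0
  | a'.+1, b'.+1 => (qbin q a' b' + q ^ b'.+1 * qbin q a' b'.+1)%N
  end.

Definition h (F : finFieldType) (n r : nat) (T : 'M[F]_(r, n)) (l j : nat) : int :=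
  let q := #|F| in
  ((q ^ (l * j))%N%:Z) *
  \sum_(S : 'M[F]_(n - l) |
          `[< semi_idempotent (fun u : 'rV[F]_(n - l) => Some (u *m S)) >]
          && (\rank S <= j)%N
          && `[< restricts_to S T >])
     mu q (srk S) * (qbin q (n - l - \rank S) (j - \rank S))%:Z.

(* Main.v *)
Require Import Defs.
From HB Require Import structures.
From mathcomp Require Import all_boot all_order all_algebra all_field.
From mathcomp Require Import boolp.
From mathcomp Require Import ring zify.
Set Implicit Arguments. Unset Strict Implicit. Unset Printing Implicit Defensive.
Import GRing.Theory.
Local Open Scope ring_scope.
Section Pow.
Variable F : fieldType.

Lemma mxpowSr n (A : 'M[F]_n) k : A ^+ k.+1 = A ^+ k *m A.
Proof. by rewrite exprSr mulmxE. Qed.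

Lemma mxpowSl n (A : 'M[F]_n) k : A ^+ k.+1 = A *m A ^+ k.
Proof. by rewrite exprS mulmxE. Qed.

Lemma pow_subS n (A : 'M[F]_n) k : (A ^+ k.+1 <= A ^+ k)%MS.
Proof. by rewrite mxpowSl submxMl. Qed.

Lemma pow_sub n (A : 'M[F]_n) i k : (i <= k)%N -> (A ^+ k <= A ^+ i)%MS.
Proof.
move=> /subnK <-; elim: (k - i)%N => [|d IH]; first by rewrite add0n.
by rewrite addSn (submx_trans (pow_subS _ _)).
Qed.

Lemma rank_pow_le n (A : 'M[F]_n) i k : (i <= k)%N -> (\rank (A ^+ k) <= \rank (A ^+ i))%N.
Proof. by move=> ik; apply: mxrankS; apply: pow_sub. Qed.

Lemma pow_eq_from n (A : 'M[F]_n) i : \rank (A ^+ i.+1) = \rank (A ^+ i) ->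
  forall k, (i <= k)%N -> (A ^+ k :=: A ^+ i)%MS.
Proof.
move=> eqr.
have Ei : (A ^+ i.+1 :=: A ^+ i)%MS.
  apply/eqmxP; rewrite -(mxrank_leqif_eq (pow_subS A i)) eqr //.
move=> k /subnK <-; elim: (k - i)%N => [|d IH]; first by rewrite add0n.
rewrite addSn mxpowSr.
apply: eqmx_trans Ei; rewrite -mxpowSr.
by rewrite mxpowSr; apply: eqmx_trans (eqmxMr A IH) _; rewrite -mxpowSr; apply: eqmx_refl.
Qed.

Lemma exists_stab n (A : 'M[F]_n) : exists2 i, (i <= n)%N & \rank (A ^+ i.+1) = \rank (A ^+ i).
Proof.
case: (boolP [exists i : 'I_n.+1, \rank (A ^+ i.+1) == \rank (A ^+ i)]).
  by case/existsP=> i /eqP e; exists i => //; rewrite -ltnS.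
rewrite negb_exists => /forallP H.
have key : forall i, (i <= n.+1)%N -> (\rank (A ^+ i) + i <= n)%N.
  elim=> [|i IH] lei; first by rewrite expr0 mxrank1 addn0.
  have ltin : (i < n.+1)%N by [].
  have := H (Ordinal ltin) => /= ne.
  have lt : (\rank (A ^+ i.+1) < \rank (A ^+ i))%N.
    by rewrite ltn_neqAle ne rank_pow_le.
  rewrite addnS; apply: leq_trans (IH (ltnW lei)); by rewrite ltn_add2r.
by have := key n.+1 (leqnn _); rewrite addnS ltnNge leq_addl.
Qed.

Lemma rank_pow_stab n (A : 'M[F]_n) k : (n <= k)%N -> \rank (A ^+ k) = \rank (A ^+ n).
Proof.
move=> nk; have [i le_in eqi] := exists_stab A.
have E1 := pow_eq_from eqi (leq_trans le_in nk).
have E2 := pow_eq_from eqi le_in.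
by rewrite E1 E2.
Qed.

Lemma pow_eqmx_stab n (A : 'M[F]_n) k : (n <= k)%N -> (A ^+ k :=: A ^+ n)%MS.
Proof.
move=> nk; apply/eqmxP; rewrite -(mxrank_leqif_eq (pow_sub A nk)).
by rewrite rank_pow_stab.
Qed.

End Pow.
Section Semi.
Variable F : fieldType.

Definition semib n (A : 'M[F]_n) : bool := A ^+ n.+1 == A ^+ n.

Lemma pow_stable_from n (A : 'M[F]_n) K : A ^+ K.+1 = A ^+ K ->
  forall k, (K <= k)%N -> A ^+ k = A ^+ K.
Proof.
move=> e k /subnK <-; elim: (k - K)%N => [|d IH]; first by rewrite add0n.
by rewrite addSn exprSr IH -exprSr e.
Qed.

Lemma semiP n (A : 'M[F]_n) : reflect (exists K, A ^+ K.+1 = A ^+ K) (semib A).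
Proof.
apply: (iffP eqP) => [e|[K e]]; first by exists n.
case: (leqP K n) => Kn.
  by rewrite (pow_stable_from e (leq_trans Kn (leqnSn n))) (pow_stable_from e Kn).
have /submxP [D eD] : (A ^+ n <= A ^+ K)%MS by rewrite (pow_eqmx_stab A (ltnW Kn)).
by rewrite mxpowSr eD -mulmxA -mxpowSr e.
Qed.

Lemma semi_pow n (A : 'M[F]_n) : semib A -> forall k, (n <= k)%N -> A ^+ k = A ^+ n.
Proof. by move/eqP => e; apply: pow_stable_from. Qed.

Lemma pow_AB m n (A : 'M[F]_(m, n)) (B : 'M_(n, m)) k :
  (A *m B) ^+ k.+1 = A *m (B *m A) ^+ k *m B.
Proof.
elim: k => [|k IH]; first by rewrite expr1 expr0 mulmx1.
by rewrite mxpowSr IH [in RHS]mxpowSr !mulmxA.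
Qed.

Lemma semi_AB m n (A : 'M[F]_(m, n)) (B : 'M_(n, m)) :
  semib (A *m B) -> semib (B *m A).
Proof.
move/eqP=> e; apply/semiP; exists m.+1.
by rewrite [LHS]pow_AB [RHS]pow_AB e.
Qed.

Lemma srk_le_AB m n (A : 'M[F]_(m, n)) (B : 'M_(n, m)) :
  (srk (A *m B) <= srk (B *m A))%N.
Proof.
have h1 : (m <= (m + n).+1)%N by apply: leq_trans (leq_addr n m) (leqnSn _).
rewrite /srk -(rank_pow_stab (A *m B) h1) pow_AB.
rewrite -(rank_pow_stab (B *m A) (leq_addl m n)).
by apply: leq_trans (mxrankM_maxl _ _) (mxrankM_maxr _ _).
Qed.

Lemma srk_AB m n (A : 'M[F]_(m, n)) (B : 'M_(n, m)) : srk (A *m B) = srk (B *m A).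
Proof. by apply/eqP; rewrite eqn_leq !srk_le_AB. Qed.

Definition fv (q : nat) n (A : 'M[F]_n) : int := if semib A then mu q (srk A) else 0.

Lemma fv_AB q m n (A : 'M[F]_(m, n)) (B : 'M_(n, m)) : fv q (A *m B) = fv q (B *m A).
Proof.
rewrite /fv srk_AB; case: (boolP (semib (A *m B))) => [/semi_AB -> //|].
by case: (boolP (semib (B *m A))) => // /semi_AB ->.
Qed.

Lemma fv_conj q n (g A : 'M[F]_n) : g \in unitmx -> fv q (g *m A *m invmx g) = fv q A.
Proof. by move=> gu; rewrite -mulmxA fv_AB mulmxKV. Qed.

End Semi.
Section Count.
Variable F : finFieldType.
Local Notation q := #|F|.

Lemma card_rowspace a b (K : 'M[F]_(a, b)) :
  #|[pred y : 'rV_b | (y <= K)%MS]| = (q ^ \rank K)%N.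
Proof.
pose f (v : 'rV[F]_(\rank K)) := v *m row_base K.
have inj : injective f by apply: row_free_inj; apply: row_base_free.
have -> : (q ^ \rank K)%N = #|codom f| by rewrite (card_codom inj) card_mx mul1n.
apply: eq_card => y.
rewrite inE /=; apply/idP/codomP => [|[v ->]].
  move=> yK; have : (y <= row_base K)%MS by rewrite eq_row_base.
  by case/submxP=> v ->; exists v.
by rewrite /f (submx_trans (submxMl _ _)) // eq_row_base.
Qed.

Lemma card_fibre a b (M : 'M[F]_(a, b)) (z : 'rV_b) : (z <= M)%MS ->
  #|[pred y : 'rV_a | y *m M == z]| = (q ^ (a - \rank M))%N.
Proof.
case/submxP=> y0 ->.
rewrite -mxrank_ker -card_rowspace.
have can1 : cancel (fun k : 'rV[F]_a => k + y0) (fun y => y - y0) by move=> k; rewrite addrK.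
rewrite -(card_imset [pred k : 'rV_a | (k <= kermx M)%MS] (can_inj can1)).
apply: eq_card => y; rewrite inE /=.
apply/idP/imsetP => [/eqP e|[k]].
  exists (y - y0); last by rewrite subrK.
  by rewrite inE sub_kermx mulmxBl e subrr.
by rewrite inE sub_kermx => /eqP e ->; rewrite mulmxDl e add0r.
Qed.

Lemma sum_fib a b (M : 'M[F]_(a, b)) (G : 'rV_b -> int) :
  \sum_(y : 'rV_a) G (y *m M) = (q ^ (a - \rank M))%:Z * \sum_(z : 'rV_b | (z <= M)%MS) G z.
Proof.
rewrite (partition_big (fun y => y *m M) (fun z => (z <= M)%MS)) /=; last by move=> y _; apply: submxMl.
rewrite mulr_sumr; apply: eq_bigr => z zM.
rewrite (eq_bigr (fun _ => G z)); last by move=> y /eqP ->.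
rewrite sumr_const card_fibre // -mulr_natl; congr (_ * _).
by rewrite natz.
Qed.

End Count.
Section Sums.
Variable F : finFieldType.

Lemma sum_row_split a b (G : 'rV[F]_(a + b) -> int) :
  \sum_(x : 'rV_(a + b)) G x = \sum_(x1 : 'rV_a) \sum_(x2 : 'rV_b) G (row_mx x1 x2).
Proof.
rewrite pair_big /= (reindex (fun p : 'rV_a * 'rV_b => row_mx p.1 p.2)) //=.
apply: onW_bij; exists (fun x => (lsubmx x, rsubmx x)) => [[x1 x2]|x] /=.
  by rewrite row_mxKl row_mxKr.
by rewrite hsubmxK.
Qed.

Lemma sum_col_split a b n (G : 'M[F]_(a + b, n) -> int) :
  \sum_(S : 'M_(a + b, n)) G S = \sum_(Q : 'M_(a, n)) \sum_(x : 'M_(b, n)) G (col_mx Q x).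
Proof.
rewrite pair_big /= (reindex (fun p : 'M_(a, n) * 'M_(b, n) => col_mx p.1 p.2)) //=.
apply: onW_bij; exists (fun x => (usubmx x, dsubmx x)) => [[x1 x2]|x] /=.
  by rewrite col_mxKu col_mxKd.
by rewrite vsubmxK.
Qed.

Lemma sum_shift m n (v : 'M[F]_(m, n)) (G : 'M_(m, n) -> int) :
  \sum_x G (x + v) = \sum_x G x.
Proof.
rewrite [RHS](reindex_inj (h := fun x => x + v)) //.
by apply: (can_inj (g := fun x => x - v)) => x; rewrite addrK.
Qed.

Lemma sum_mulg m n (g : 'M[F]_n) (G : 'M_(m, n) -> int) : g \in unitmx ->
  \sum_x G (x *m g) = \sum_x G x.
Proof.
move=> gu; rewrite [RHS](reindex_inj (h := fun x => x *m g)) //.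
by apply: (can_inj (g := fun x => x *m invmx g)) => x; rewrite mulmxK.
Qed.

End Sums.

Section Rank.
Variable F : fieldType.

Lemma rank_col_row m n (Q : 'M[F]_(m, n)) (x : 'rV_n) :
  \rank (col_mx Q x) = (\rank Q + ~~ (x <= Q)%MS)%N.
Proof.
rewrite -addsmxE; case: (boolP (x <= Q)%MS) => xQ /=.
  by rewrite addn0; move/addsmx_idPl: xQ => ->.
have := mxrank_sum_cap Q x.
have x0 : x != 0 by apply: contraNneq xQ => ->; apply: sub0mx.
rewrite rank_rV x0.
suff -> : \rank (Q :&: x)%MS = 0%N by rewrite addn0.
have := mxrankS (capmxSr Q x); rewrite rank_rV x0 /= leq_eqVlt ltnS leqn0.
case/orP=> [/eqP r1|/eqP //].
exfalso; move: xQ; apply/negP; rewrite negbK.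
have : (x <= (Q :&: x)%MS)%MS.
  rewrite -(mxrank_leqif_sup (capmxSr Q x)) r1 rank_rV x0 //.
by move/submx_trans; apply; apply: capmxSl.
Qed.

End Rank.
Section OVL.
Variable F : finFieldType.
Local Notation q := #|F|.
Local Notation fq := (@fv F q).

Lemma mu_succ k : mu q k.+1 = - ((q ^ k)%N%:Z) * mu q k.
Proof.
rewrite /mu exprS binS bin1 expnD PoszM.
ring.
Qed.

Lemma unitmx_pow n (A : 'M[F]_n) k : A \in unitmx -> A ^+ k \in unitmx.
Proof.
move=> u; elim: k => [|k IH]; first by rewrite expr0 unitmx1.
by rewrite mxpowSr unitmx_mul IH u.
Qed.

Lemma fv_unit n (A : 'M[F]_n) : A \in unitmx -> fq A = if A == 1%:M then mu q n else 0.
Proof.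
move=> u; rewrite /fv.
have -> : semib A = (A == 1%:M).
  apply/eqP/eqP => [e|->]; last by rewrite !expr1n.
  have : A ^+ n *m A = A ^+ n *m 1%:M by rewrite -mxpowSr e mulmx1.
  exact: (can_inj (mulKmx (unitmx_pow n u))).
by case: eqP => // ->; rewrite /srk expr1n mxrank1.
Qed.

Lemma sum_if_eq (T : finType) (P : pred T) (x0 : T) (a : int) :
  \sum_(x | P x) (if x == x0 then a else 0) = if P x0 then a else 0.
Proof.
rewrite big_mkcond (bigD1 x0) //= eqxx big1 ?addr0 //.
by move=> x /negbTE ->; rewrite if_same.
Qed.

Lemma rank_col_row2 m n (Q : 'M[F]_(m, n)) (x : 'rV_n) :
  \rank (col_mx x Q) = (\rank Q + ~~ (x <= Q)%MS)%N.
Proof. by rewrite -addsmxE addsmxC addsmxE rank_col_row. Qed.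

Lemma ovl_gen_n n : (forall k, k.+1 = n -> forall Q : 'M[F]_(k, 1 + k),
     \sum_(x : 'rV_(1 + k)) fq (col_mx x Q) = 0) ->
  forall (R0 : 'M[F]_n) (c : 'cV_n), c != 0 -> \sum_(x : 'rV_n) fq (R0 + c *m x) = 0.
Proof.
case: n => [|k] H R0 c nz; first by rewrite (flatmx0 c) eqxx in nz.
have H' := H k erefl.
have rc : \rank c = 1%N.
  apply/eqP; rewrite eqn_leq rank_leq_col lt0n mxrank_eq0 nz.
  done.
pose G := col_ebase c; pose u := row_ebase c.
pose e0 : 'cV[F]_(1 + k) := col_mx 1%:M 0.
pose a := u 0 0.
have ua : a \is a GRing.unit by rewrite /a -det_mx11 -unitmxE row_ebase_unit.
have ec : c = G *m (a *: e0).
  rewrite -{1}(mulmx_ebase c) rc -/G -/u -mulmxA; congr (_ *m _).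
  have -> : (pid_mx 1 : 'M[F]_(k.+1, 1)) = e0 by exact: (@pid_mx_col F k 1).
  by rewrite [u]mx11_scalar mul_mx_scalar.
pose g := a^-1 *: invmx G.
have gu : g \in unitmx.
  by rewrite /g unitmxZ; [rewrite unitmx_inv col_ebase_unit | rewrite unitrV].
have gc : g *m c = e0.
  rewrite ec /g -scalemxAl mulmxA mulVmx ?col_ebase_unit // mul1mx.
  by rewrite scalerA mulVr // scale1r.
pose M := g *m R0 *m invmx g.
transitivity (\sum_(x : 'rV_(1 + k)) fq (M + e0 *m (x *m invmx g))).
  apply: eq_bigr => x _; rewrite -(@fv_conj F q _ g (R0 + c *m x) gu).
  by rewrite mulmxDr mulmxDl /M -gc !mulmxA.
rewrite (sum_mulg (fun x => fq (M + e0 *m x))) ?unitmx_inv //.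
transitivity (\sum_(x : 'rV_(1 + k)) fq (col_mx (x + usubmx (M : 'M_(1 + k, 1 + k))) (dsubmx (M : 'M_(1 + k, 1 + k))))).
  apply: eq_bigr => x _; congr (fq _).
  rewrite -{1}(vsubmxK (M : 'M_(1 + k, 1 + k))) /e0 mul_col_mx mul1mx mul0mx.
  by rewrite (@add_col_mx _ 1 k (1 + k)) addr0 addrC.
by rewrite (sum_shift (usubmx (M : 'M_(1 + k, 1 + k))) (fun x => fq (col_mx x _))) H'.
Qed.

End OVL.
Section OVL2.
Variable F : finFieldType.
Local Notation q := #|F|.
Local Notation fq := (@fv F q).

Lemma ovl k (Q : 'M[F]_(k, 1 + k)) : \sum_(x : 'rV_(1 + k)) fq (col_mx x Q) = 0.
Proof.
elim/ltn_ind: k Q => k IH Q.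
have gen : forall (R0 : 'M[F]_k) (c : 'cV_k), c != 0 ->
    \sum_(x : 'rV_k) fq (R0 + c *m x) = 0.
  by apply: ovl_gen_n => k' ek'; apply: IH; rewrite -ek'.
case: (ltnP (\rank Q) k) => [ltrk|gerk].
- set r := \rank Q in ltrk *.
  pose Q' := row_base Q.
  pose Y := Q *m pinvmx Q'.
  have hQ : Y *m Q' = Q by rewrite mulmxKpV // eq_row_base.
  pose L : 'M[F]_(1 + k, 1 + r) := block_mx 1%:M 0 0 Y.
  have E : forall x : 'rV_(1 + k), fq (col_mx x Q) = fq (col_mx (x *m L) (Q' *m L)).
    move=> x; rewrite -mul_col_mx -fv_AB /L mul_block_col !mul1mx !mul0mx addr0 add0r hQ.
    done.
  rewrite (eq_bigr _ (fun x _ => E x)) sum_row_split.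
  have rY : \rank Y = r.
    apply/eqP; rewrite eqn_leq rank_leq_col /r -{1}hQ mxrankM_maxl.
    done.
  have fullY : row_full Y by rewrite /row_full rY.
  transitivity (\sum_(x1 : 'rV_1) (q ^ (k - r))%N%:Z *
       \sum_(z : 'rV_r) fq (col_mx (row_mx x1 z) (Q' *m L))).
    apply: eq_bigr => x1 _.
    rewrite (eq_bigr (fun x2 => fq (col_mx (row_mx x1 (x2 *m Y)) (Q' *m L)))); last first.
      by move=> x2 _; rewrite mul_row_block !mulmx1 !mulmx0 addr0 add0r.
    rewrite (sum_fib Y (fun z => fq (col_mx (row_mx x1 z) (Q' *m L)))) rY.
    congr (_ * _); apply: eq_bigl => z; exact: submx_full.
  rewrite -mulr_sumr -(sum_row_split (fun x => fq (col_mx x (Q' *m L)))).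
  by rewrite IH ?mulr0.
- have rQ : \rank Q = k by apply/eqP; rewrite eqn_leq rank_leq_row gerk.
  rewrite (bigID (fun x => (x <= Q)%MS)) /=.
  pose Q0 := rsubmx Q; pose psi := lsubmx Q.
  have hQ : Q = row_mx psi Q0 by rewrite hsubmxK.
  have Eb : forall x : 'rV_(1 + k), ~~ (x <= Q)%MS ->
      fq (col_mx x Q) = if x == row_mx 1%:M 0 then
                          (if Q == row_mx 0 1%:M then mu q (1 + k) else 0) else 0.
    move=> x xQ.
    have u : col_mx x Q \in unitmx.
      by rewrite -row_free_unit /row_free rank_col_row2 rQ xQ addn1.
    rewrite fv_unit //.
    have -> : (col_mx x Q == 1%:M) = (x == row_mx 1%:M 0) && (Q == row_mx 0 1%:M).
      rewrite [1%:M]scalar_mx_block block_mxEv.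
      apply/eqP/andP => [/eq_col_mx [-> ->] //|[/eqP -> /eqP ->] //].
    by case: (x == _); case: (Q == _).
  rewrite [X in _ + X](eq_bigr _ Eb) sum_if_eq.
  have Ea : \sum_(x | (x <= Q)%MS) fq (col_mx x Q) = \sum_(y : 'rV_k) fq (Q0 + psi *m y).
    have := sum_fib Q (fun x => fq (col_mx x Q)); rewrite rQ subnn expn0 mul1r => <-.
    apply: eq_bigr => y _.
    rewrite -{2}(mul1mx Q) -mul_col_mx fv_AB {1}hQ mul_row_col mulmx1 addrC.
    done.
  rewrite Ea.
  case: (boolP (psi == 0)) => [/eqP p0|pn0]; last first.
    rewrite (eq_bigr (fun y => fq (Q0 + psi *m y))) // gen // add0r.
    have -> : (Q == row_mx 0 1%:M) = false.
      apply/negbTE; apply: contra pn0 => /eqP e.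
      by rewrite /psi e row_mxKl.
    by rewrite if_same.
  rewrite (eq_bigr (fun _ => fq Q0)); last by move=> y _; rewrite p0 mul0mx addr0.
  rewrite sumr_const card_mx mul1n.
  have uQ0 : Q0 \in unitmx.
    by rewrite -row_free_unit /row_free -(rank_row_0mx 1) -p0 -hQ rQ.
  rewrite fv_unit //.
  have -> : (Q == row_mx 0 1%:M) = (Q0 == 1%:M).
    rewrite hQ p0; apply/eqP/eqP => [/eq_row_mx [_ ->] //|-> //].
  case: (boolP (Q0 == 1%:M)) => Q01; last by rewrite mul0rn add0r if_same.
  have -> : ~~ (row_mx (1%:M : 'M[F]_1) 0 <= Q)%MS.
    apply/negP; rewrite hQ p0 (eqP Q01) => /submxP [D].
    rewrite mul_mx_row mulmx0 mulmx1 => /eq_row_mx [e _].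
    by have := congr1 (fun A : 'M[F]_1 => A 0 0) e; rewrite !mxE /= => /eqP; rewrite oner_eq0.
  rewrite mu_succ -mulr_natl natz.
  by rewrite mulNr addrC addNr.
Qed.

Lemma ovl_gen n (R0 : 'M[F]_n) (c : 'cV_n) : c != 0 ->
  \sum_(x : 'rV_n) fq (R0 + c *m x) = 0.
Proof. by apply: ovl_gen_n => k _; apply: ovl. Qed.

End OVL2.
Section Glue.
Variable F : finFieldType.
Local Notation q := #|F|.
Local Notation fq := (@fv F q).

Lemma ppow_mx m (S : 'M[F]_m) N (v : 'rV_m) :
  ppow (fun u : 'rV[F]_m => Some (u *m S)) N v = Some (v *m S ^+ N).
Proof.
elim: N => [|N IH] /=; first by rewrite expr0 mulmx1.
by rewrite IH /= mxpowSr mulmxA.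
Qed.

Lemma semi_idemP m (S : 'M[F]_m) :
  reflect (semi_idempotent (fun u : 'rV[F]_m => Some (u *m S))) (semib S).
Proof.
apply: (iffP (semiP S)) => [[K e]|[N H]].
  exists K => v w; rewrite ppow_mx => -[<-]; by rewrite -mulmxA -mxpowSr e.
exists N; apply/row_matrixP => i.
have := H (row i 1%:M) (row i 1%:M *m S ^+ N); rewrite ppow_mx => /(_ erefl) [].
by rewrite -mulmxA -mxpowSr -!row_mul !mul1mx.
Qed.

Lemma asbool_semi m (S : 'M[F]_m) :
  `[< semi_idempotent (fun u : 'rV[F]_m => Some (u *m S)) >] = semib S.
Proof. by apply/asboolP/idP => /semi_idemP. Qed.

End Glue.
Section Restr.
Variable F : fieldType.

Lemma inV_row0 m' r (u : 'rV[F]_m') : inV r (row_mx u (0 : 'rV_1)) = inV r u.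
Proof.
apply/forallP/forallP => H k.
  by have := H (lshift 1 k); rewrite row_mxEl.
rewrite -(splitK k); case: (split k) => [k'|k'] /=.
  by rewrite row_mxEl; apply: H.
by rewrite row_mxEr mxE eqxx implybT.
Qed.

Lemma inV_split m' r (u : 'rV[F]_(m' + 1)) : (r <= m')%N -> inV r u ->
  u = row_mx (lsubmx u) 0.
Proof.
move=> rm /forallP H; rewrite -{1}(hsubmxK u); congr row_mx.
apply/rowP => k; rewrite !mxE.
have := H (rshift m' k); rewrite /= (leq_trans rm (leq_addr _ _)) /= => /eqP ->.
done.
Qed.

Lemma emb_row0 m' n (v : 'rV[F]_m') : emb n (row_mx v (0 : 'rV_1)) = emb n v.
Proof.
apply/rowP => j; rewrite !mxE big_split_ord /=.
rewrite [X in _ + X]big1 ?addr0; last by move=> i _; rewrite row_mxEr mxE.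
by apply: eq_bigr => i _; rewrite row_mxEl.
Qed.

Definition R1 n r (T : 'M[F]_(r, n)) m' (Q : 'M[F]_(m', m' + 1)) : Prop :=
  forall u : 'rV_m', inV r u -> emb n (u *m Q) = emb n (row_mx u (0 : 'rV_1)) *m extT T.

Lemma restr_col n r (T : 'M[F]_(r, n)) m' (Q : 'M_(m', m' + 1)) (x : 'rV_(m' + 1)) :
  (r <= m')%N -> restricts_to (col_mx Q x) T <-> R1 T Q.
Proof.
move=> rm; split => H u uV.
  have := H (row_mx u 0); rewrite inV_row0 => /(_ uV).
  by rewrite mul_row_col mul0mx addr0.
rewrite (inV_split rm uV) mul_row_col mul0mx addr0; apply: H.
by rewrite -(inV_row0 r (lsubmx u)) -(inV_split rm uV).
Qed.

Lemma R1_row0 n r (T : 'M[F]_(r, n)) m' (Q0 : 'M_m') :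
  R1 T (row_mx Q0 (0 : 'cV_m')) <-> restricts_to Q0 T.
Proof.
split => H u uV; have := H u uV;
  by rewrite mul_mx_row mulmx0 !emb_row0.
Qed.

End Restr.
Section Main.
Variable F : finFieldType.
Local Notation q := #|F|.
Local Notation fq := (@fv F q).

Lemma qbin0 a : qbin q a 0 = 1%N.
Proof. by case: a. Qed.

Definition Wt m j k : int := if (k <= j)%N then (qbin q (m - k) (j - k))%:Z else 0.

Lemma Wt_step m' j k : (k <= m')%N ->
  (q ^ k)%N%:Z * (Wt (m' + 1) j k - Wt (m' + 1) j k.+1) = (q ^ j)%N%:Z * Wt m' j k.
Proof.
move=> km; rewrite /Wt addn1 subSS (subSn km).
case: (ltngtP k j) => [kj|jk|->].
- rewrite -(subnSK kj) /= PoszD [X in X - _]addrC addrK PoszM mulrA -PoszM -expnD.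
  by rewrite subnSK // subnKC // ltnW.
- by rewrite subrr !mulr0.
- by rewrite subnn !qbin0 subr0.
Qed.

Lemma sum_hsplit m a b (G : 'M[F]_(m, a + b) -> int) :
  \sum_(x : 'M_(m, a + b)) G x = \sum_(x1 : 'M_(m, a)) \sum_(x2 : 'M_(m, b)) G (row_mx x1 x2).
Proof.
rewrite pair_big /= (reindex (fun p : 'M_(m, a) * 'M_(m, b) => row_mx p.1 p.2)) //=.
apply: onW_bij; exists (fun x => (lsubmx x, rsubmx x)) => [[x1 x2]|x] /=.
  by rewrite row_mxKl row_mxKr.
by rewrite hsubmxK.
Qed.

Lemma q_gt0 : (0 < q)%N.
Proof. by apply/card_gt0P; exists 0. Qed.

Lemma inner_sum m' j (Q : 'M[F]_(m', m' + 1)) :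
  \sum_(x : 'rV_(m' + 1)) fq (col_mx Q x) * Wt (m' + 1) j (\rank (col_mx Q x)) =
  (\sum_(x | (x <= Q)%MS) fq (col_mx Q x)) * (Wt (m' + 1) j (\rank Q) - Wt (m' + 1) j (\rank Q).+1).
Proof.
have ovlQ : \sum_(x : 'rV_(m' + 1)) fq (col_mx Q x) = 0.
  have nz : (col_mx 0 1%:M : 'cV[F]_(m' + 1)) != 0.
    apply/eqP => /(congr1 dsubmx); rewrite col_mxKd => /matrixP /(_ 0 0).
    by rewrite !mxE /= => /eqP; rewrite oner_eq0.
  rewrite -[RHS](ovl_gen (col_mx Q 0) nz); apply: eq_bigr => x _.
  by rewrite mul_col_mx mul0mx mul1mx add_col_mx add0r addr0.
move: ovlQ; rewrite (bigID (fun x => (x <= Q)%MS)) /= => /eqP; rewrite addr_eq0 => /eqP e.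
rewrite (bigID (fun x => (x <= Q)%MS)) /=.
rewrite (eq_bigr (fun x => fq (col_mx Q x) * Wt (m' + 1) j (\rank Q))); last first.
  by move=> x xQ; rewrite rank_col_row xQ addn0.
rewrite [X in _ + X](eq_bigr (fun x => fq (col_mx Q x) * Wt (m' + 1) j (\rank Q).+1)); last first.
  by move=> x xQ; rewrite rank_col_row xQ [(\rank Q + _)%N]addn1.
rewrite -!mulr_suml e; ring.
Qed.

Lemma a_sum m' (Q : 'M[F]_(m', m' + 1)) :
  \sum_(x | (x <= Q)%MS) fq (col_mx Q x) =
  if rsubmx Q == 0 then (q ^ \rank Q)%N%:Z * fq (lsubmx Q) else 0.
Proof.
have key := sum_fib Q (fun x => fq (col_mx Q x)).
have E : forall y : 'rV_m', fq (col_mx Q (y *m Q)) = fq (lsubmx Q + rsubmx Q *m y).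
  move=> y; rewrite -{1}(mul1mx Q) -mul_col_mx fv_AB -{1}(hsubmxK Q) mul_row_col mulmx1.
  done.
rewrite (eq_bigr _ (fun y _ => E y)) in key.
have qn0 : forall e, (q ^ e)%N%:Z != 0.
  move=> e; have : (0 < q ^ e)%N by rewrite expn_gt0 q_gt0.
  by rewrite -lt0n.
case: (boolP (rsubmx Q == 0)) => [/eqP p0|pn0].
  rewrite (eq_bigr (fun _ => fq (lsubmx Q))) in key; last by move=> y _; rewrite p0 mul0mx addr0.
  rewrite sumr_const card_mx mul1n in key.
  have rQ : \rank Q = \rank (lsubmx Q) by rewrite -{1}(hsubmxK Q) p0 rank_row_mx0.
  have rle : (\rank Q <= m')%N by rewrite rank_leq_row.
  apply: (mulfI (qn0 (m' - \rank Q)%N)); rewrite -key.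
  by rewrite mulrA -PoszM -expnD subnK // -mulr_natr natz mulrC.
rewrite (eq_bigr (fun y => fq (lsubmx Q + rsubmx Q *m y))) // ovl_gen // in key.
by apply: (mulfI (qn0 (m' - \rank Q)%N)); rewrite -key mulr0.
Qed.

End Main.
Section Final.
Variable F : finFieldType.
Local Notation q := #|F|.
Local Notation fq := (@fv F q).
Variables (n r : nat) (T : 'M[F]_(r, n)).

Definition Bsum m j : int :=
  \sum_(S : 'M[F]_m) (if `[< restricts_to S T >] then fq S * Wt F m j (\rank S) else 0).

Lemma h_Bsum l j : h T l j = (q ^ (l * j))%N%:Z * Bsum (n - l) j.
Proof.
rewrite /h /Bsum; congr (_ * _).
rewrite big_mkcond; apply: eq_bigr => S _.
rewrite asbool_semi /fv /Wt.
by case: (semib S); case: (\rank S <= j)%N; case: `[< _ >]; rewrite /= ?mulr0 ?mul0r.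
Qed.

Lemma Bsum_step m' j : (r <= m')%N -> Bsum (m' + 1) j = (q ^ j)%N%:Z * Bsum m' j.
Proof.
move=> rm; rewrite /Bsum sum_col_split.
have step1 : forall Q : 'M[F]_(m', m' + 1),
  \sum_(x : 'rV_(m' + 1)) (if `[< restricts_to (col_mx Q x) T >]
       then fq (col_mx Q x) * Wt F (m' + 1) j (\rank (col_mx Q x)) else 0)
  = if `[< R1 T Q >] then
      (if rsubmx Q == 0 then (q ^ \rank Q)%N%:Z * fq (lsubmx Q) else 0) *
      (Wt F (m' + 1) j (\rank Q) - Wt F (m' + 1) j (\rank Q).+1) else 0.
  move=> Q.
  have e : forall x, `[< restricts_to (col_mx Q x) T >] = `[< R1 T Q >].
    by move=> x; apply/asboolP/asboolP => /(restr_col T Q x rm).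
  rewrite (eq_bigr (fun x => if `[< R1 T Q >] then
      fq (col_mx Q x) * Wt F (m' + 1) j (\rank (col_mx Q x)) else 0)); last first.
    by move=> x _; rewrite e.
  case: `[< R1 T Q >]; last by rewrite big1.
  by rewrite inner_sum a_sum.
rewrite (eq_bigr _ (fun Q _ => step1 Q)) {step1}.
rewrite sum_hsplit mulr_sumr; apply: eq_bigr => Q0 _.
rewrite (bigD1 0) //= big1 ?addr0; last first.
  by move=> psi /negbTE pn; rewrite row_mxKr pn mul0r if_same.
rewrite row_mxKr eqxx row_mxKl rank_row_mx0.
have -> : `[< R1 T (row_mx Q0 (0 : 'cV_m')) >] = `[< restricts_to Q0 T >].
  by apply/asboolP/asboolP => /R1_row0.
case: `[< _ >]; last by rewrite mulr0.
rewrite [_ * fv _ _]mulrC -mulrA Wt_step ?rank_leq_row //.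
by rewrite mulrCA.
Qed.

Lemma h_step l j : (l.+1 <= n - r)%N -> h T l j = h T l.+1 j.
Proof.
move=> hl; rewrite !h_Bsum.
have ln : (l < n)%N.
  by apply: leq_trans hl (leq_subr _ _).
have e : (n - l)%N = ((n - l.+1) + 1)%N by rewrite addn1 subnSK.
have rm : (r <= n - l.+1)%N by lia.
rewrite e Bsum_step // mulrA -PoszM -expnD.
by rewrite mulSn addnC.
Qed.

End Final.

Unset Implicit Arguments.
Set Strict Implicit.

Theorem proposition3p6 (F : finFieldType) (n r : nat) (T : 'M[F]_(r, n)) :
  (r <= n)%N ->
  semi_idempotent (Tpart T) ->
  forall j l1 l2 : nat, (j <= r)%N -> (l1 <= n - r)%N -> (l2 <= n - r)%N ->
  h T l1 j = h T l2 j.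
Proof.
move=> _ _ j l1 l2 _.
suff H : forall d l, (l + d)%N = (n - r)%N -> h T l j = h T (n - r) j.
  move=> h1 h2; rewrite (H (n - r - l1)%N l1) ?subnKC // (H (n - r - l2)%N l2) ?subnKC //.
elim=> [|d IH] l e; first by rewrite -e addn0.
rewrite h_step; last by rewrite -e addnS ltnS leq_addr.
by apply: IH; rewrite addSnnS.
Qed.
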